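(* Let $s,t,n$ be positive integers with $1\le s\le t\le n$ and $s\mid n$. Then \[ \bigl|\overline{\mathcal{R}}(s,t,n)\bigr|\;\le\;\bigl|\mathcal{R}(s,t,n)\bigr|\;\le\;(t-s)!\cdot\left(\frac{t!}{(t-s)!}\right)^{n/s}. \]
   Context: For distinct reals $\mathbf{c}=(c_0,\dots,c_{t-1})$, let $f_{\mathbf{c}}\in S_t$ (the permutations of $\{0,\dots,t-1\}$) be given by $f_{\mathbf{c}}(i)=|\{j: c_j<c_i\}|$. For $\mathbf{c}=(c_0,\dots,c_{n-1})\in\mathbb{R}^n$ with distinct entries and $1\le t\le n$, $0\le p\le n-1$, the window $\mathbf{c}_{p,t}=(c_p,c_{p+1},\dots,c_{p+t-1})$ with indices taken modulo $n$. The $(s,t,n)$-local rank-modulation demodulation maps $\mathbf{c}$ to $\mathbf{f}_{\mathbf{c}}=(f_{\mathbf{c}_{0,t}},f_{\mathbf{c}_{s,t}},f_{\mathbf{c}_{2s,t}},\dots,f_{\mathbf{c}_{n-s,t}})$, a sequence of $n/s$ permutations in $S_t$. $\mathcal{R}(s,t,n)$ is the set of all sequences $\mathbf{f}_{\mathbf{c}}$ obtained this way from some $\mathbf{c}\in\mathbb{R}^n$ with distinct entries. For $f\in S_t$ and position $k\in\{0,\dots,t-1\}$, the factoradic digit of $f$ at position $k$ is $|\{k'>k: f(k')<f(k)\}|$; let $\bar f$ denote the vector of the digits at positions $0,1,\dots,s-1$ (the $s$ most significant factoradic digits). $\overline{\mathcal{R}}(s,t,n)$ is the set of all sequences $(\bar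 f_{\mathbf{c}_{0,t}},\bar f_{\mathbf{c}_{s,t}},\dots,\bar f_{\mathbf{c}_{n-s,t}})$ for $\mathbf{c}\in\mathbb{R}^n$ with distinct entries. *)

(* Defs.v *)
From HB Require Import structures.
From mathcomp Require Import all_boot all_order all_algebra.
From mathcomp Require Import boolp reals.
Set Implicit Arguments. Unset Strict Implicit. Unset Printing Implicit Defensive.
Import Order.TTheory GRing.Theory Num.Theory.

Section LRM.
Variable R : realType.

Definition rank_of (t : nat) (w : 'I_t -> R) (i : 'I_t) : nat :=
  #|[pred j : 'I_t | (w j < w i)%R]|.

Lemma rank_of_lt (t : nat) (w : 'I_t -> R) (i : 'I_t) : rank_of w i < t.
Proof.
rewrite /rank_of -[X in _ < X]card_ord; apply: proper_card.
apply/properP; split; first by apply/subsetP.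
by exists i => //=; rewrite inE ltxx.
Qed.

(* f_w in S_t, represented as its (bijective) function 'I_t -> 'I_t *)
Definition pattern (t : nat) (w : 'I_t -> R) : {ffun 'I_t -> 'I_t} :=
  [ffun i => Ordinal (rank_of_lt w i)].

Definition window (n t : nat) (c : n.-tuple R) (p : nat) : 'I_t -> R :=
  fun j => nth 0%R c ((p + j) %% n).

Definition demod (s t n : nat) (c : n.-tuple R) :
  {ffun 'I_(n %/ s) -> {ffun 'I_t -> 'I_t}} :=
  [ffun m : 'I_(n %/ s) => pattern (@window n t c (m * s))].

Definition LRM (s t n : nat) : {set {ffun 'I_(n %/ s) -> {ffun 'I_t -> 'I_t}}} :=
  [set F | `[< exists c : n.-tuple R, uniq c /\ demod s t c = F >]].

End LRM.

(* factoradic digit of f at (nat) position k : #{k' > k : f k' < f k} *)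
Definition fdigit (t : nat) (f : {ffun 'I_t -> 'I_t}) (k : nat) : nat :=
  #|[pred k' : 'I_t | (k < k') && [exists k0 : 'I_t, (val k0 == k) && (f k' < f k0)]]|.

(* the s most significant digits (positions 0..s-1); each digit is <= t,
   so inord into 'I_t.+1 is faithful *)
Definition fbar (s t : nat) (f : {ffun 'I_t -> 'I_t}) : {ffun 'I_s -> 'I_t.+1} :=
  [ffun j : 'I_s => inord (fdigit f j)].

Definition LRMbar (R : realType) (s t n : nat) :
  {set {ffun 'I_(n %/ s) -> {ffun 'I_s -> 'I_t.+1}}} :=
  [set G | `[< exists c : n.-tuple R, uniq c /\
               [ffun m => fbar s (demod s t c m)] = G >]].

(* Main.v *)
Require Import Defs.
From HB Require Import structures.
From mathcomp Require Import all_boot all_order all_algebra.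
From mathcomp Require Import boolp reals.
From mathcomp Require Import zify.
Set Implicit Arguments. Unset Strict Implicit. Unset Printing Implicit Defensive.
Import Order.TTheory GRing.Theory Num.Theory.

Lemma rank_lt_mono (R : realType) t (w : 'I_t -> R) i i' :
  (w i < w i')%R -> rank_of w i < rank_of w i'.
Proof.
move=> lt; rewrite /rank_of; apply: proper_card; apply/properP; split.
  by apply/subsetP=> j; rewrite !inE => /lt_trans; apply.
by exists i; rewrite !inE ?ltxx.
Qed.

Lemma rank_lt (R : realType) t (w : 'I_t -> R) i i' : injective w ->
  (rank_of w i < rank_of w i') = (w i < w i')%R.
Proof.
move=> winj; apply/idP/idP; last exact: rank_lt_mono.
case: (ltgtP (w i) (w i')) => // [gt|eq].
  by move=> lt; have := rank_lt_mono gt; rewrite ltnNge (ltnW lt).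
by rewrite (winj _ _ eq) ltnn.
Qed.

Lemma pattern_lt (R : realType) t (w : 'I_t -> R) i i' : injective w ->
  (pattern w i < pattern w i') = (w i < w i')%R.
Proof. by move=> winj; rewrite !ffunE /= rank_lt. Qed.

Lemma pattern_inj (R : realType) t (w : 'I_t -> R) : injective w -> injective (pattern w).
Proof.
move=> winj i i' e; case: (ltgtP (w i) (w i')) => [h|h|/winj //].
  by have := pattern_lt i i' winj; rewrite h e ltnn.
by have := pattern_lt i' i winj; rewrite h e ltnn.
Qed.

Lemma window_inj (R : realType) n t (c : n.-tuple R) p :
  t <= n -> uniq c -> injective (@window R n t c p).
Proof.
move=> tn uc i i'; rewrite /window => e.
have hi := leq_trans (ltn_ord i) tn; have hi' := leq_trans (ltn_ord i') tn.
have n0 : 0 < n by lia.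
have : (p + i) %% n == (p + i') %% n.
  by rewrite -(nth_uniq 0%R _ _ uc) ?size_tuple ?ltn_pmod // e.
by rewrite eqn_modDl !modn_small // => /eqP/val_inj.
Qed.

Lemma demod_comp (R : realType) s t n (c : n.-tuple R) (m1 m2 : 'I_(n %/ s))
  (i i' j j' : 'I_t) : t <= n -> uniq c -> val m2 = (val m1).+1 ->
  val i = s + val j -> val i' = s + val j' ->
  (demod s t c m1 i < demod s t c m1 i') = (demod s t c m2 j < demod s t c m2 j').
Proof.
move=> tn uc e2 ei ei'; rewrite !ffunE /= !rank_lt; try exact: window_inj.
rewrite /window ei ei' e2 mulSn.
have E : forall x, m1 * s + (s + x) = s + m1 * s + x by move=> x; rewrite addnCA addnA.
by rewrite !E.
Qed.

Lemma recon t d (f g : {ffun 'I_t -> 'I_t}) : injective f -> injective g ->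
  (forall i : 'I_t, d <= i -> f i = g i) ->
  (forall j j' : 'I_t, j < d -> j' < d -> (f j < f j') = (g j < g j')) -> f = g.
Proof.
move=> fi gi eQ eP.
set P := [set i : 'I_t | i < d]; set Q := ~: P.
have fQ : f @: Q = g @: Q.
  by apply: eq_in_imset => i; rewrite !inE -leqNgt; exact: eQ.
set A := ~: (f @: Q).
have imP : forall h : {ffun 'I_t -> 'I_t}, injective h -> h @: Q = f @: Q -> h @: P = A.
  move=> h hi hQ; apply/eqP; rewrite eqEcard; apply/andP; split.
    apply/subsetP => _ /imsetP [j jP ->]; rewrite inE -hQ; apply/imsetP => [[q qQ /hi e]].
    by move: qQ; rewrite inE -e jP.
  rewrite (card_imset _ hi) /A.
  have := cardsC (f @: Q); rewrite (card_imset _ fi) => h1.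
  have := cardsC P => h2.
  rewrite /Q in h1 *; lia.
have hf := imP f fi erefl; have hg := imP g gi (esym fQ).
have cnt : forall h : {ffun 'I_t -> 'I_t}, injective h -> h @: P = A ->
    forall j, #|[set a in A | a < h j]| = #|[set j' in P | h j' < h j]|.
  move=> h hi hP j; rewrite -[RHS](card_imset _ hi); apply: eq_card => a.
  rewrite inE -hP; apply/andP/imsetP.
    by move=> [/imsetP [j' j'P ->] lt]; exists j' => //; rewrite inE j'P lt.
  move=> [j' + ->]; rewrite inE => /andP [j'P lt]; split => //.
  by apply/imsetP; exists j'.
apply/ffunP => j; case: (boolP (j \in P)) => jP; last first.
  by apply: eQ; move: jP; rewrite inE -leqNgt.
have jd : j < d by move: jP; rewrite inE.
have e : #|[set a in A | a < f j]| = #|[set a in A | a < g j]|.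
  rewrite (cnt f) // (cnt g) //; apply: eq_card => j'; rewrite !inE.
  by case: (boolP (j' < d)) => //= j'd; apply: eP.
have Af : f j \in A by rewrite -hf; apply: imset_f.
have Ag : g j \in A by rewrite -hg; apply: imset_f.
case: (ltngtP (f j) (g j)) => [lt|lt|eq]; last by apply: val_inj.
  have : [set a in A | a < f j] \proper [set a in A | a < g j].
    apply/properP; split.
      by apply/subsetP => a; rewrite !inE => /andP [-> /ltn_trans]; apply.
    by exists (f j); [rewrite inE Af lt | rewrite inE ltnn andbF].
  by move/proper_card; rewrite e ltnn.
have : [set a in A | a < g j] \proper [set a in A | a < f j].
  apply/properP; split.
    by apply/subsetP => a; rewrite !inE => /andP [-> /ltn_trans]; apply.
  by exists (g j); [rewrite inE Ag lt | rewrite inE ltnn andbF].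
by move/proper_card; rewrite e ltnn.
Qed.

Definition valid s t k (F : {ffun 'I_k -> {ffun 'I_t -> 'I_t}}) :=
  (forall m, injective (F m)) /\
  (forall (m1 m2 : 'I_k) (i i' j j' : 'I_t), val m2 = (val m1).+1 ->
     val i = s + val j -> val i' = s + val j' ->
     (F m1 i < F m1 i') = (F m2 j < F m2 j')).
Arguments valid s t {k} F.

Lemma lastpos_proof s t (st : s <= t) (j : 'I_s) : t - s + j < t.
Proof. have := ltn_ord j; lia. Qed.

Definition lastpos s t (st : s <= t) (j : 'I_s) : 'I_t := Ordinal (lastpos_proof st j).

Lemma count_valid s t k (st : s <= t)
  (S : {set {ffun 'I_k -> {ffun 'I_t -> 'I_t}}}) : 0 < k ->
  (forall F, F \in S -> valid s t F) -> #|S| <= t`! * (t ^_ s) ^ k.-1.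
Proof.
case: k S => [|k] S // _ hS.
pose Phi (F : {ffun 'I_k.+1 -> {ffun 'I_t -> 'I_t}}) :
  {ffun 'I_t -> 'I_t} * {ffun 'I_k -> {ffun 'I_s -> 'I_t}} :=
  (F ord0, [ffun m : 'I_k => ([ffun j : 'I_s => (F (lift ord0 m) (lastpos st j) : 'I_t)]
     : {ffun 'I_s -> 'I_t})]).
pose A1 := [set f : {ffun 'I_t -> 'I_t} | injectiveb f].
pose A2 := [set f : {ffun 'I_s -> 'I_t} | injectiveb f].
have -> : #|S| = #|Phi @: S|.
  apply/esym/card_in_imset => F G FS GS [e0 e1].
  have [Fi Fc] := hS F FS; have [Gi Gc] := hS G GS.
  apply/ffunP => -[m hm].
  elim: m hm => [|m IH] hm.
    by rewrite (_ : Ordinal hm = ord0) //; apply: val_inj.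
  have hm' : m < k.+1 by apply: ltnW.
  have hmk : m < k by rewrite -ltnS.
  pose m' : 'I_k := Ordinal hmk.
  have hl : lift ord0 m' = Ordinal hm by apply: val_inj.
  apply: (@recon t (t - s)); try exact: Fi; try exact: Gi.
    move=> i hi.
    have hj : i - (t - s) < s by have := ltn_ord i; lia.
    have := congr1 (fun x : {ffun 'I_k -> {ffun 'I_s -> 'I_t}} => x m' (Ordinal hj)) e1; rewrite !ffunE /= hl.
    by rewrite (_ : lastpos st (Ordinal hj) = i) //; apply: val_inj => /=; lia.
  move=> j j' hj hj'.
  have pj : s + j < t by lia.
  have pj' : s + j' < t by lia.
  rewrite -(Fc (Ordinal hm') (Ordinal hm) (Ordinal pj) (Ordinal pj')) //.
  rewrite -(Gc (Ordinal hm') (Ordinal hm) (Ordinal pj) (Ordinal pj')) //.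
  by rewrite IH.
apply: (@leq_trans #|setX A1 [set g in ffun_on A2]|).
  apply: subset_leq_card; apply/subsetP => _ /imsetP [F FS ->].
  have [Fi _] := hS F FS.
  rewrite inE /=; apply/andP; split.
    by rewrite inE; apply/injectiveP.
  rewrite inE; apply/ffun_onP => m; rewrite ffunE inE; apply/injectiveP => j j'.
  rewrite !ffunE => /Fi e; apply: val_inj; have := congr1 val e => /=; lia.
rewrite cardsX /A1 card_inj_ffuns card_ord ffactnn (cardsE (ffun_on A2)) card_ffun_on /A2 card_inj_ffuns !card_ord.
by [].
Qed.

Theorem lemma1 (R : realType) (s t n : nat) :
  0 < s -> s <= t -> t <= n -> s %| n ->
  #|LRMbar R s t n| <= #|LRM R s t n| /\
  #|LRM R s t n| <= (t - s)`! * (t`! %/ (t - s)`!) ^ (n %/ s).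
Proof.
move=> s0 st tn sn; split.
  have -> : LRMbar R s t n =
      [set [ffun m => fbar s (F m)] | F : {ffun 'I_(n %/ s) -> {ffun 'I_t -> 'I_t}} in LRM R s t n].
    apply/setP => G; apply/idP/imsetP.
      rewrite inE => /asboolP [c [uc <-]]; exists (demod s t c) => //.
      by rewrite inE; apply/asboolP; exists c.
    move=> [F]; rewrite inE => /asboolP [c [uc <-]] ->; rewrite inE.
    by apply/asboolP; exists c.
  exact: leq_imset_card.
have k0 : 0 < n %/ s by rewrite divn_gt0 // (leq_trans st tn).
have hv : forall F, F \in LRM R s t n -> valid s t F.
  move=> F; rewrite inE => /asboolP [c [uc <-]]; split.
    by move=> m; rewrite ffunE; apply/pattern_inj/window_inj.
  by move=> m1 m2 i i' j j' e2 ei ei'; apply: demod_comp.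
apply: (leq_trans (count_valid st k0 hv)).
case: (n %/ s) k0 => // k _ /=.
rewrite -(ffact_factd st) expnS mulnA -(ffact_fact st) (mulnC (t ^_ s)).
by [].
Qed.
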